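(* Let $G$ be a graph and $k$ a positive integer, and let $X$ be the set of vertices of $G$ that do not lie in any subgraph of $G$ with minimum degree at least $k$. If $|X| \geq k$, then $\sum_{v \in X} \deg_G(v) \leq 2(k-1)|X| - \binom{k}{2}$.
   Context: All graphs are finite, simple and undirected; $\deg_G(v)$ denotes the degree of $v$ in $G$. *)

(* Defs.v *)
From mathcomp Require Import all_boot.
Set Implicit Arguments. Unset Strict Implicit. Unset Printing Implicit Defensive.

Definition simple_graph (T : finType) (e : rel T) : Prop :=
  symmetric e /\ irreflexive e.

Definition deg (T : finType) (e : rel T) (v : T) : nat := #|[set u | e v u]|.

Definition is_subgraph (T : finType) (e : rel T) (S : {set T}) (f : rel T) : Prop :=
  symmetric f /\ (forall x y, f x y -> [/\ x \in S, y \in S & e x y]).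

Definition sub_deg (T : finType) (S : {set T}) (f : rel T) (v : T) : nat :=
  #|[set u in S | f v u]|.

Definition in_k_core_sub (T : finType) (e : rel T) (k : nat) (v : T) : Prop :=
  exists (S : {set T}) (f : rel T),
    [/\ is_subgraph e S f, v \in S & forall w, w \in S -> k <= sub_deg S f w].

(* Main.v *)
Require Import Defs.
From mathcomp Require Import all_boot.
From mathcomp Require Import zify.
From Stdlib Require Import Classical.

Set Implicit Arguments. Unset Strict Implicit. Unset Printing Implicit Defensive.

Lemma card_sum (T : finType) (P : pred T) :
  #|[set u | P u]| = \sum_u nat_of_bool (P u).
Proof.
rewrite -sum1_card big_mkcond /=. apply: eq_bigr => u _.
by rewrite inE; case: (P u).
Qed.

Lemma sum_in (T : finType) (A : {set T}) (F : T -> bool) :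
  \sum_(u in A) nat_of_bool (F u) = \sum_u nat_of_bool ((u \in A) && F u).
Proof.
rewrite big_mkcond /=. apply: eq_bigr => u _. by case: (u \in A).
Qed.

Lemma peel (T : finType) (e : rel T) (k : nat) (X Y : {set T}) :
  simple_graph e -> (forall v : T, v \in X <-> ~ in_k_core_sub e k v) ->
  Y \subset X -> Y != set0 ->
  exists2 v, v \in Y &
    \sum_(u in Y) nat_of_bool (e v u) + \sum_(u in ~: X) nat_of_bool (e v u) < k.
Proof.
move=> [esym eirr] HX sYX Y0.
case: (boolP [exists v in Y,
   \sum_(u in Y) nat_of_bool (e v u) + \sum_(u in ~: X) nat_of_bool (e v u) < k]).
  by move/exists_inP => [v vY H]; exists v.
move/exists_inPn => Hall.
case/set0Pn: Y0 => y yY.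
exfalso. have yX : y \in X := subsetP sYX y yY.
apply: (proj1 (HX y) yX).
exists (Y :|: ~: X), (fun a b => [&& a \in Y :|: ~: X, b \in Y :|: ~: X & e a b]).
split.
- split.
    move=> a b /=. rewrite (esym a b).
    by case: (a \in Y :|: ~: X); case: (b \in Y :|: ~: X).
  by move=> a b /and3P [? ? ?]; split.
- by rewrite inE yY.
- move=> w wS. rewrite /sub_deg.
  case/setUP: (wS) => [wY | wC].
  + have := Hall w wY. rewrite -leqNgt => Hk. apply: leq_trans Hk _.
    rewrite !sum_in -big_split /= card_sum; apply: eq_leq.
    apply: eq_bigr => u _.
    rewrite wS !inE.
    case: (boolP (u \in Y)) => uY /=.
      by rewrite (subsetP sYX u uY) /=; case: (e w u).
    by case: (u \in X); case: (e w u).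
  + have Hw : in_k_core_sub e k w.
      case: (classic (in_k_core_sub e k w)) => // H; exfalso.
      rewrite in_setC in wC. by move/negP: wC; apply; apply/(proj2 (HX w)).
    case: Hw => S' [f' [[f'sym f'sub] wS' Hdeg]].
    have S'C : forall z, z \in S' -> z \notin X.
      move=> z zS'. apply/negP => zX. apply: (proj1 (HX z) zX).
      by exists S', f'; split.
    apply: leq_trans (Hdeg w wS') _. apply: subset_leq_card.
    apply/subsetP => u. rewrite !inE => /andP [uS' fwu].
    have [_ _ ewu] := f'sub _ _ fwu.
    by rewrite S'C // orbT ewu andbT -(in_setC w X) wC orbT.
Qed.

Definition F (k n : nat) := \sum_(j < n) (k.-1 + minn k.-1 j).

Lemma main_ind (T : finType) (e : rel T) (k : nat) (X : {set T}) :
  simple_graph e -> (forall v : T, v \in X <-> ~ in_k_core_sub e k v) ->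
  forall n (Y : {set T}), #|Y| = n -> Y \subset X ->
  \sum_(v in Y) (\sum_(u in Y) nat_of_bool (e v u)
                 + \sum_(u in ~: X) nat_of_bool (e v u)) <= F k n.
Proof.
move=> [esym eirr] HX. elim=> [|n IH] Y cY sYX.
  move/eqP: cY; rewrite cards_eq0 => /eqP ->. by rewrite big_set0.
have Y0 : Y != set0 by rewrite -cards_eq0 cY.
have [v vY Hv] := peel (conj esym eirr) HX sYX Y0.
have cY' : #|Y :\ v| = n by move: cY; rewrite (cardsD1 v) vY; case.
have sY'X : Y :\ v \subset X by apply: subset_trans sYX; apply: subsetDl.
have := IH _ cY' sY'X.
rewrite (big_setD1 v vY) /=.
rewrite (big_setD1 v vY) /= eirr /= add0n.
set b := \sum_(u in Y :\ v) nat_of_bool (e v u).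
set a := \sum_(u in ~: X) nat_of_bool (e v u).
move: Hv; rewrite (big_setD1 v vY) /= eirr add0n -/b -/a => Hv.
have -> : \sum_(i in Y :\ v) (\sum_(u in Y) nat_of_bool (e i u)
     + \sum_(u in ~: X) nat_of_bool (e i u)) =
     b + \sum_(i in Y :\ v) (\sum_(u in Y :\ v) nat_of_bool (e i u)
     + \sum_(u in ~: X) nat_of_bool (e i u)).
  rewrite /b -big_split /=. apply: eq_bigr => w _.
  by rewrite (big_setD1 v vY) /= (esym w v) addnA.
move=> HIH.
have bn : b <= n.
  rewrite -cY' -sum1_card /b. apply: leq_sum => u _. by case: (e v u).
have bk : b <= minn k.-1 n by rewrite leq_min bn; lia.
rewrite /F big_ord_recr /= -/(F k n). lia.
Qed.

Lemma F_closed (k d : nat) : 0 < k -> F k (k + d) + 'C(k, 2) = 2 * (k - 1) * (k + d).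
Proof.
move=> k0. elim: d => [|d IH].
  rewrite addn0 /F.
  have -> : \sum_(j < k) (k.-1 + minn k.-1 j) = \sum_(j < k) (k.-1 + j).
    apply: eq_bigr => j _. congr (_ + _). have := ltn_ord j. lia.
  rewrite big_split /= sum_nat_const card_ord -(big_mkord xpredT (fun i => i)) bin2_sum.
  have : 'C(k, 2) + 'C(k, 2) = k * k.-1.
    clear. elim: k => // k IH. rewrite binS bin1. move: IH. case: k => //= k. lia.
  lia.
rewrite addnS /F big_ord_recr /= -/(F k (k + d)).
have -> : minn k.-1 (k + d) = k.-1 by lia.
lia.
Qed.

Theorem lemma2p2 (T : finType) (e : rel T) (k : nat) (X : {set T}) :
  simple_graph e -> 0 < k ->
  (forall v : T, v \in X <-> ~ in_k_core_sub e k v) ->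
  k <= #|X| ->
  (\sum_(v in X) deg e v) + 'C(k, 2) <= 2 * (k - 1) * #|X|.
Proof.
move=> sg k0 HX kX.
have H := main_ind sg HX (erefl #|X|) (subxx X).
have -> : \sum_(v in X) deg e v =
   \sum_(v in X) (\sum_(u in X) nat_of_bool (e v u)
                 + \sum_(u in ~: X) nat_of_bool (e v u)).
  apply: eq_bigr => v _. rewrite /deg card_sum (bigID (fun u => u \in X)) /=.
  congr (_ + _); apply: eq_bigl => u; by rewrite ?inE.
have [d Hd] : exists d, #|X| = k + d by exists (#|X| - k); lia.
rewrite Hd in H *. by rewrite -(F_closed d k0) leq_add2r.
Qed.
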